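(* Let $S\subseteq\mathbb{S}$ be nonempty. The Cournot game on $S$ has a unique pure Nash equilibrium, given for each $i\in S$ by $$\hat q_i=\frac{W(e^{\theta_i-1})}{1+\sum_{j\in S}W(e^{\theta_j-1})},\qquad \hat p_i=1+W(e^{\theta_i-1}).$$ Consequently, writing $w_i=W(e^{\theta_i-1})$, the equilibrium social welfare and revenue are $$\widehat{sw}(S)=\log\Big(1+\sum_{i\in S}w_i\Big)+\frac{\sum_{i\in S}(w_i^2+w_i)}{1+\sum_{i\in S}w_i},\qquad \widehat{re}(S)=\frac{\sum_{i\in S}(w_i^2+w_i)}{1+\sum_{i\in S}w_i}.$$
   Context: Sellers $\mathbb{S}=\{1,\dots,n\}$ with product qualities $\theta_i\ge0$. Cournot game on a displayed set $S$: seller $i\in S$ chooses a demand (quantity) $q_i$; the joint profile must lie in $\mathcal Q=\{\boldsymbol q:\ 0\le\sum_{i\in\bar S}q_i\le \frac{\sum_{i\in\bar S}e^{\theta_i}}{1+\sum_{i\in\bar S}e^{\theta_i}}\ \forall\bar S\subseteq S\}$; the resulting price is $p_i(\boldsymbol q)=\theta_i+\log(1-\sum_{j\in S}q_j)-\log q_i$ (the inverse of the MNL demand $q_i=e^{\theta_i-p_i}/(1+\sum_{j\in S}e^{\theta_j-p_j})$), and seller $i$'s payoff is $r_i(\boldsymbol q)=p_i(\boldsymbol q)q_i$. Social welfare is $\log(1+\sum_{j\in S}e^{\theta_j-p_j})+\sum_{i\in S}p_iq_i$ and revenue is $\sum_{i\in S}p_iq_i$. $W$ is the Lambert W function on $[0,\infty)$: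 $W(x)e^{W(x)}=x$. *)

(* Defs.v *)
From Stdlib Require Import Reals List Arith ClassicalEpsilon.
Import ListNotations.
Open Scope R_scope.

Definition LambertW (x : R) : R :=
  epsilon (inhabits 0) (fun w => 0 <= w /\ w * exp w = x).

Definition sumS (S : list nat) (f : nat -> R) : R :=
  fold_right (fun i acc => f i + acc) 0 S.

Definition feasible (theta : nat -> R) (S : list nat) (q : nat -> R) : Prop :=
  forall Sb : list nat, incl Sb S -> NoDup Sb ->
    0 <= sumS Sb q /\
    sumS Sb q <= sumS Sb (fun i => exp (theta i)) / (1 + sumS Sb (fun i => exp (theta i))).

(* inverse MNL price *)
Definition price (theta : nat -> R) (S : list nat) (q : nat -> R) (i : nat) : R :=
  theta i + ln (1 - sumS S q) - ln (q i).

Definition payoff (theta : nat -> R) (S : list nat) (q : nat -> R) (i : nat) : R :=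
  price theta S q i * q i.

Definition update (q : nat -> R) (i : nat) (x : R) : nat -> R :=
  fun j => if Nat.eq_dec j i then x else q j.

Definition is_NE (theta : nat -> R) (S : list nat) (q : nat -> R) : Prop :=
  feasible theta S q /\
  forall i, In i S -> forall x : R,
    feasible theta S (update q i x) ->
    payoff theta S (update q i x) i <= payoff theta S q i.

Definition revenue (theta : nat -> R) (S : list nat) (q : nat -> R) : R :=
  sumS S (fun i => price theta S q i * q i).

Definition welfare (theta : nat -> R) (S : list nat) (q : nat -> R) : R :=
  ln (1 + sumS S (fun j => exp (theta j - price theta S q j))) + revenue theta S q.

(* Main.v *)
Require Import Defs.
From Stdlib Require Import Reals List Arith Lra ClassicalEpsilon.
From Coquelicot Require Import Coquelicot.
Import ListNotations.
Open Scope R_scope.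
Lemma sumS_ext L f g : (forall j, In j L -> f j = g j) -> sumS L f = sumS L g.
Proof.
  induction L as [|a L IH]; simpl; intros H; [reflexivity|].
  rewrite H by auto. rewrite IH by auto. reflexivity.
Qed.

Lemma sumS_le L f g : (forall j, In j L -> f j <= g j) -> sumS L f <= sumS L g.
Proof.
  induction L as [|a L IH]; simpl; intros H; [lra|].
  assert (f a <= g a) by auto. assert (sumS L f <= sumS L g) by auto. lra.
Qed.

Lemma sumS_nonneg L f : (forall j, In j L -> 0 <= f j) -> 0 <= sumS L f.
Proof.
  intros H. replace 0 with (sumS L (fun _ => 0)).
  - apply sumS_le. auto.
  - induction L; simpl; auto. rewrite IHL; [lra|]. intros; apply H; simpl; auto.
Qed.

Lemma sumS_scal L c f : sumS L (fun j => c * f j) = c * sumS L f.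
Proof. induction L; simpl; [ring|]. rewrite IHL. ring. Qed.

Lemma sumS_minus L f g : sumS L (fun j => f j - g j) = sumS L f - sumS L g.
Proof. induction L; simpl; [ring|]. rewrite IHL. ring. Qed.

Lemma sumS_remove L a f : NoDup L -> In a L ->
  sumS L f = f a + sumS (remove Nat.eq_dec a L) f.
Proof.
  induction L as [|b L IH]; simpl; intros Hnd Hin; [contradiction|].
  inversion Hnd; subst.
  destruct (Nat.eq_dec a b) as [->|Hne].
  - rewrite notin_remove by auto. reflexivity.
  - destruct Hin as [->|Hin]; [congruence|].
    simpl. rewrite IH by auto. ring.
Qed.

Lemma NoDup_remove_nat L a : NoDup L -> NoDup (remove Nat.eq_dec a L).
Proof.
  induction L as [|b L IH]; simpl; intros H; [constructor|].
  inversion H; subst. destruct (Nat.eq_dec a b); auto.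
  constructor; auto. intros Hc. apply in_remove in Hc as [Hc _]. auto.
Qed.

Lemma sumS_sub S Sb f : NoDup Sb -> incl Sb S -> (forall j, In j S -> 0 <= f j) ->
  sumS Sb f <= sumS S f.
Proof.
  revert Sb. induction S as [|a S IH]; intros Sb Hnd Hinc Hf.
  - destruct Sb as [|b Sb]; simpl; [lra|]. exfalso. apply (Hinc b); simpl; auto.
  - simpl. destruct (in_dec Nat.eq_dec a Sb) as [Ha|Ha].
    + rewrite (sumS_remove Sb a) by auto.
      assert (sumS (remove Nat.eq_dec a Sb) f <= sumS S f).
      { apply IH.
        - apply NoDup_remove_nat; auto.
        - intros x Hx. apply in_remove in Hx as [Hx Hxa]. destruct (Hinc x Hx); [congruence|auto].
        - intros; apply Hf; simpl; auto. }
      lra.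
    + assert (sumS Sb f <= sumS S f).
      { apply IH; auto.
        - intros x Hx. destruct (Hinc x Hx); [subst; contradiction|auto].
        - intros; apply Hf; simpl; auto. }
      assert (0 <= f a) by (apply Hf; simpl; auto). lra.
Qed.
Lemma ln_div x y : 0 < x -> 0 < y -> ln (x / y) = ln x - ln y.
Proof. intros. unfold Rdiv. rewrite ln_mult, ln_Rinv; auto. apply Rinv_0_lt_compat; auto. Qed.

Lemma wexp_strict u v : 0 <= u -> u < v -> u * exp u < v * exp v.
Proof.
  intros Hu Huv. assert (exp u < exp v) by (apply exp_increasing; auto).
  assert (0 < exp u) by apply exp_pos. nra.
Qed.

Lemma LW_exists a : 0 < a -> exists w, 0 <= w /\ w * exp w = a.
Proof.
  intros Ha.
  destruct (IVT (fun w => w * exp w - a) 0 a) as [z [Hz1 Hz2]].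
  - intros x. apply continuity_pt_minus; [|apply continuity_pt_const; intros ? ?; reflexivity].
    apply continuity_pt_mult; [apply derivable_continuous_pt; apply derivable_pt_id|].
    apply derivable_continuous_pt; apply derivable_pt_exp.
  - auto.
  - rewrite exp_0. lra.
  - assert (1 < exp a) by (rewrite <- exp_0; apply exp_increasing; auto). nra.
  - exists z. split; lra.
Qed.

Lemma LW_spec a : 0 < a -> 0 < LambertW a /\ LambertW a * exp (LambertW a) = a.
Proof.
  intros Ha. unfold LambertW.
  destruct (epsilon_spec (inhabits 0) (fun w => 0 <= w /\ w * exp w = a) (LW_exists a Ha)) as [H1 H2].
  split; auto. destruct H1 as [H1|H1]; auto. rewrite <- H1 in H2. lra.
Qed.

Lemma LW_unique a u : 0 < a -> 0 <= u -> u * exp u = a -> u = LambertW a.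
Proof.
  intros Ha Hu Hue. destruct (LW_spec a Ha) as [Hw Hwe].
  destruct (Rtotal_order u (LambertW a)) as [H|[H|H]]; auto.
  - pose proof (wexp_strict _ _ Hu H). lra.
  - pose proof (wexp_strict (LambertW a) u ltac:(lra) H). lra.
Qed.

Lemma ln_le_sub1 y : 0 < y -> ln y <= y - 1.
Proof. intros Hy. pose proof (exp_ineq1_le (ln y)). rewrite exp_ln in H; lra. Qed.

Lemma ln_eq_sub1 y : 0 < y -> y - 1 <= ln y -> y = 1.
Proof.
  intros Hy H. destruct (Req_dec (ln y) 0) as [H0|H0].
  - rewrite <- (exp_ln y Hy), H0, exp_0. reflexivity.
  - pose proof (exp_ineq1 _ H0). rewrite exp_ln in H1; lra.
Qed.

Lemma w_props th : let w := LambertW (exp (th - 1)) in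
  0 < w /\ ln w + w = th - 1 /\ w < exp th /\ exp (th - 1 - w) = w.
Proof.
  intros w. destruct (LW_spec (exp (th-1)) (exp_pos _)) as [Hw Hwe]. fold w in Hw, Hwe.
  assert (ln w + w = th - 1).
  { rewrite <- (ln_exp (th-1)), <- Hwe, ln_mult, ln_exp by (auto; apply exp_pos). ring. }
  split; [auto|split; [auto|split]].
  - assert (1 < exp w) by (rewrite <- exp_0; apply exp_increasing; auto).
    assert (exp (th - 1) < exp th) by (apply exp_increasing; lra). nra.
  - replace (th - 1 - w) with (ln w) by lra. apply exp_ln; auto.
Qed.

Lemma br_bound th w R x : 0 < w -> ln w + w = th - 1 -> 0 < R -> 0 <= x < R ->
  (th + ln (R - x) - ln x) * x <= R * w /\
  (R * w <= (th + ln (R - x) - ln x) * x -> x = R * w / (1 + w)).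
Proof.
  intros Hw Hth HR [Hx0 HxR].
  destruct Hx0 as [Hx|Hx].
  - set (y := w * (R - x) / x).
    assert (Hy : 0 < y) by (unfold y; apply Rdiv_lt_0_compat; nra).
    assert (Hly : ln y = ln w + ln (R - x) - ln x).
    { unfold y. rewrite ln_div, ln_mult by (auto; nra). ring. }
    assert (Hxy : y * x = w * (R - x)) by (unfold y; field; lra).
    pose proof (ln_le_sub1 y Hy) as Hl.
    replace (th + ln (R - x) - ln x) with (1 + w + ln y) by lra.
    split.
    + nra.
    + intros H2. assert (y - 1 <= ln y).
      { apply (Rmult_le_reg_r x); [auto|]. nra. }
      apply ln_eq_sub1 in H; auto. rewrite H in Hxy. field_simplify_eq; lra.
  - subst x. split; [nra|]. intros. nra.
Qed.

Lemma br_eq th w R : 0 < w -> ln w + w = th - 1 -> 0 < R ->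
  let x := R * w / (1 + w) in (th + ln (R - x) - ln x) * x = R * w.
Proof.
  intros Hw Hth HR x.
  assert (Hx : 0 < x) by (unfold x; apply Rdiv_lt_0_compat; nra).
  assert (HRx : R - x = x / w) by (unfold x; field; lra).
  rewrite HRx, ln_div by lra. replace (th + (ln x - ln w) - ln x) with (1 + w) by lra.
  unfold x; field; lra.
Qed.
Definition Bnd (theta : nat -> R) (Sb : list nat) :=
  sumS Sb (fun i => exp (theta i)) / (1 + sumS Sb (fun i => exp (theta i))).

Lemma update_same q i x : update q i x i = x.
Proof. unfold update. destruct (Nat.eq_dec i i); congruence. Qed.

Lemma sumS_update_notin L q i x : ~ In i L -> sumS L (update q i x) = sumS L q.
Proof.
  intros H. apply sumS_ext. intros j Hj. unfold update.
  destruct (Nat.eq_dec j i); [subst; contradiction|auto].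
Qed.

Lemma sumS_update_in L q i x : NoDup L -> In i L ->
  sumS L (update q i x) = sumS L q - q i + x.
Proof.
  intros Hnd Hin. rewrite (sumS_remove L i (update q i x)), (sumS_remove L i q) by auto.
  rewrite update_same, sumS_update_notin by (apply remove_In). ring.
Qed.

Lemma Bnd_nonneg theta Sb : 0 <= sumS Sb (fun i => exp (theta i)).
Proof. apply sumS_nonneg. intros; left; apply exp_pos. Qed.

Lemma Bnd_lt1 theta Sb : Bnd theta Sb < 1.
Proof.
  unfold Bnd. pose proof (Bnd_nonneg theta Sb).
  apply (Rmult_lt_reg_r (1 + sumS Sb (fun i => exp (theta i)))); [lra|].
  unfold Rdiv. rewrite Rmult_assoc, Rinv_l by lra. lra.
Qed.

Lemma feas_nonneg theta S q j : feasible theta S q -> In j S -> 0 <= q j.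
Proof.
  intros Hf Hj. destruct (Hf [j]) as [H _].
  - intros x [<-|[]]; auto.
  - constructor; [intros []|constructor].
  - simpl in H. lra.
Qed.

Lemma feas_lt1 theta S q : feasible theta S q -> NoDup S -> sumS S q < 1.
Proof.
  intros Hf Hnd. destruct (Hf S (incl_refl _) Hnd) as [_ H].
  pose proof (Bnd_lt1 theta S). unfold Bnd in *. lra.
Qed.

Lemma payoff_update theta S q i x : NoDup S -> In i S ->
  payoff theta S (update q i x) i = (theta i + ln ((1 - (sumS S q - q i)) - x) - ln x) * x.
Proof.
  intros. unfold payoff, price. rewrite sumS_update_in, update_same by auto.
  f_equal. f_equal. f_equal. f_equal. ring.
Qed.

Lemma payoff_self theta S q i :
  payoff theta S q i = (theta i + ln ((1 - (sumS S q - q i)) - q i) - ln (q i)) * q i.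
Proof. unfold payoff, price. f_equal. f_equal. f_equal. f_equal. ring. Qed.

Lemma feas_update theta S q i x : feasible theta S q -> 0 <= x ->
  (forall Sb, incl Sb S -> NoDup Sb -> In i Sb -> sumS Sb q - q i + x <= Bnd theta Sb) ->
  feasible theta S (update q i x).
Proof.
  intros Hf Hx H Sb Hinc Hnd. split.
  - apply sumS_nonneg. intros j Hj. unfold update. destruct (Nat.eq_dec j i); auto.
    apply (feas_nonneg theta S); auto.
  - destruct (in_dec Nat.eq_dec i Sb) as [Hi|Hi].
    + rewrite sumS_update_in by auto. apply H; auto.
    + rewrite sumS_update_notin by auto. apply Hf; auto.
Qed.

Lemma frac_mono a b : 0 <= a -> a <= b -> a / (1 + a) <= b / (1 + b).
Proof.
  intros Ha Hab. apply (Rmult_le_reg_r ((1+a)*(1+b))); [nra|].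
  replace (a / (1 + a) * ((1 + a) * (1 + b))) with (a * (1 + b)) by (field; lra).
  replace (b / (1 + b) * ((1 + a) * (1 + b))) with (b * (1 + a)) by (field; lra). nra.
Qed.

Lemma div_mono c a b d : 0 <= c -> c <= a -> 0 < b -> b <= d -> c / d <= a / b.
Proof.
  intros. apply (Rmult_le_reg_r (b*d)); [nra|].
  replace (c / d * (b * d)) with (c * b) by (field; lra).
  replace (a / b * (b * d)) with (a * d) by (field; lra). nra.
Qed.

Lemma dd th R c : 0 < c -> c < R ->
  derivable_pt_lim (fun x => (th + ln (R - x) - ln x) * x) c (th + ln (R - c) - ln c - c/(R-c) - 1).
Proof.
  intros. apply is_derive_Reals. auto_derive.
  - repeat split; lra.
  - unfold Rminus; field; lra.
Qed.

Theorem theorem5 (n : nat) (theta : nat -> R) (S : list nat)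
  (Htheta : forall i, (1 <= i <= n)%nat -> 0 <= theta i)
  (HSsub : forall i, In i S -> (1 <= i <= n)%nat)
  (HSnd : NoDup S) (HSne : S <> []) :
  let w := fun i => LambertW (exp (theta i - 1)) in
  let qhat := fun i => w i / (1 + sumS S w) in
  is_NE theta S qhat /\
  (forall q, is_NE theta S q -> forall i, In i S -> q i = qhat i) /\
  (forall i, In i S -> price theta S qhat i = 1 + w i) /\
  welfare theta S qhat =
    ln (1 + sumS S w) + sumS S (fun i => w i ^ 2 + w i) / (1 + sumS S w) /\
  revenue theta S qhat = sumS S (fun i => w i ^ 2 + w i) / (1 + sumS S w).
Proof.
  intros w qhat.
  assert (Hw : forall i, 0 < w i /\ ln (w i) + w i = theta i - 1 /\ w i < exp (theta i)
                 /\ exp (theta i - 1 - w i) = w i) by (intros i; apply w_props).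
  set (W := sumS S w).
  assert (HW : 0 <= W) by (apply sumS_nonneg; intros j _; left; apply Hw).
  assert (Hsq : forall L, sumS L qhat = sumS L w / (1 + W)).
  { intros L. unfold qhat. fold W.
    rewrite (sumS_ext L _ (fun j => / (1 + W) * w j)) by (intros; unfold Rdiv; ring).
    rewrite sumS_scal. unfold Rdiv. ring. }
  assert (Hprice : forall i, In i S -> price theta S qhat i = 1 + w i).
  { intros i Hi. unfold price. rewrite Hsq. fold W. destruct (Hw i) as [Hw0 [Hw1 _]].
    replace (1 - W / (1 + W)) with (/ (1 + W)) by (field; lra).
    unfold qhat. fold W. rewrite ln_Rinv, ln_div by lra. lra. }
  assert (HNE : is_NE theta S qhat).
  { split.
    - intros Sb Hinc Hnd. rewrite Hsq.
      assert (HWb0 : 0 <= sumS Sb w) by (apply sumS_nonneg; intros j _; left; apply Hw).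
      assert (HWb : sumS Sb w <= W) by (apply sumS_sub; auto; intros j _; left; apply Hw).
      split; [apply Rdiv_le_0_compat; lra|].
      apply Rle_trans with (sumS Sb w / (1 + sumS Sb w)).
      + apply div_mono; lra.
      + apply frac_mono; auto. apply sumS_le. intros j _. left; apply Hw.
    - intros i Hi x Hfx.
      destruct (Hw i) as [Hw0 [Hw1 _]].
      set (R0 := 1 - (sumS S qhat - qhat i)).
      assert (HR0 : R0 = (1 + w i) / (1 + W)) by (unfold R0; rewrite Hsq; unfold qhat; fold W; field; lra).
      assert (HR0p : 0 < R0) by (rewrite HR0; apply Rdiv_lt_0_compat; lra).
      assert (Hx0 : 0 <= x) by (rewrite <- (update_same qhat i x); eapply feas_nonneg; eauto).
      assert (HxR : x < R0).
      { pose proof (feas_lt1 _ _ _ Hfx HSnd). rewrite sumS_update_in in H by auto.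
        unfold R0; lra. }
      rewrite payoff_update by auto. fold R0.
      destruct (br_bound (theta i) (w i) R0 x Hw0 Hw1 HR0p (conj Hx0 HxR)) as [Hb _].
      eapply Rle_trans; [exact Hb|].
      unfold payoff. rewrite Hprice by auto. unfold qhat. fold W. rewrite HR0. right. field. lra. }
  split; [exact HNE|].
  split.
  {
    intros q [Hf Hne].
    set (Q := sumS S q).
    assert (Hq0 : forall j, In j S -> 0 <= q j) by (intros; eapply feas_nonneg; eauto).
    assert (HQ : Q < 1) by (apply (feas_lt1 theta); auto).
    assert (HA : forall j, In j S -> q j <= (1 - Q) * w j).
    { intros j Hj. destruct (Rle_or_lt (q j) ((1 - Q) * w j)) as [H|H]; auto. exfalso.
      destruct (Hw j) as [Hw0 [Hw1 _]].
      set (Rj := 1 - (Q - q j)).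
      assert (HRj : 0 < Rj) by (unfold Rj; pose proof (Hq0 j Hj); lra).
      set (xs := Rj * w j / (1 + w j)).
      assert (Hxs0 : 0 < xs) by (unfold xs; apply Rdiv_lt_0_compat; nra).
      assert (Hxs : xs < q j).
      { unfold xs. apply (Rmult_lt_reg_r (1 + w j)); [lra|].
        replace (Rj * w j / (1 + w j) * (1 + w j)) with (Rj * w j) by (field; lra).
        unfold Rj; nra. }
      assert (Hfe : feasible theta S (update q j xs)).
      { apply feas_update; [auto|lra|]. intros Sb Hinc Hnd Hin.
        destruct (Hf Sb Hinc Hnd) as [_ Hb]. unfold Bnd. lra. }
      pose proof (Hne j Hj xs Hfe) as Hle.
      rewrite payoff_update in Hle by auto. fold Q in Hle. fold Rj in Hle.
      rewrite payoff_self in Hle. fold Q in Hle. fold Rj in Hle.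
      unfold xs in Hle. rewrite br_eq in Hle by auto.
      destruct (br_bound (theta j) (w j) Rj (q j) Hw0 Hw1 HRj) as [_ Heq].
      { split; [auto|]. unfold Rj; lra. }
      apply Heq in Hle. fold xs in Hle. lra. }
    set (E := sumS S (fun i => exp (theta i))).
    assert (HE : 0 <= E) by apply Bnd_nonneg.
    assert (HB : forall i, In i S -> forall x, 0 <= x -> x <= q i + (exp (theta i) - w i) / ((1 + E) * (1 + W)) ->
              feasible theta S (update q i x)).
    { intros i Hi x Hx0 Hx. apply feas_update; auto. intros Sb Hinc Hnd Hin.
      set (s := sumS Sb q). set (Wb := sumS Sb w). set (Eb := sumS Sb (fun i => exp (theta i))).
      assert (HWb0 : 0 <= Wb) by (apply sumS_nonneg; intros j _; left; apply Hw).
      assert (HWb : Wb <= W) by (apply sumS_sub; auto; intros j _; left; apply Hw).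
      assert (HEb0 : 0 <= Eb) by apply Bnd_nonneg.
      assert (HEb : Eb <= E) by (apply sumS_sub; auto; intros j _; left; apply exp_pos).
      assert (Hs1 : s <= (1 - Q) * Wb).
      { unfold s, Wb. rewrite <- sumS_scal. apply sumS_le. intros j Hj. apply HA; auto. }
      assert (Hs2 : s <= Q) by (apply sumS_sub; auto).
      assert (Hs3 : s <= Wb / (1 + Wb)).
      { apply (Rmult_le_reg_r (1 + Wb)); [lra|].
        replace (Wb / (1 + Wb) * (1 + Wb)) with Wb by (field; lra). nra. }
      assert (Hd : exp (theta i) - w i <= Eb - Wb).
      { unfold Eb, Wb. rewrite <- sumS_minus. rewrite (sumS_remove Sb i) by auto.
        assert (0 <= sumS (remove Nat.eq_dec i Sb) (fun j => exp (theta j) - w j)).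
        { apply sumS_nonneg. intros j _. destruct (Hw j) as [_ [_ [H _]]]. lra. }
        lra. }
      assert (Hdp : 0 <= exp (theta i) - w i) by (destruct (Hw i) as [_ [_ [H _]]]; lra).
      assert (Hk : Bnd theta Sb - Wb / (1 + Wb) = (Eb - Wb) / ((1 + Eb) * (1 + Wb))).
      { unfold Bnd. fold Eb. field. lra. }
      assert ((exp (theta i) - w i) / ((1 + E) * (1 + W)) <= (Eb - Wb) / ((1 + Eb) * (1 + Wb))).
      { apply div_mono; auto; nra. }
      fold s. lra. }
    assert (HC : forall i, In i S -> q i = (1 - Q) * w i).
    { intros i Hi. destruct (Hw i) as [Hw0 [Hw1 [Hw2 _]]].
      set (d := (exp (theta i) - w i) / ((1 + E) * (1 + W))).
      assert (Hd : 0 < d) by (unfold d; apply Rdiv_lt_0_compat; nra).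
      set (Ri := 1 - (Q - q i)).
      destruct (Hq0 i Hi) as [Hqi|Hqi].
      -
        assert (HRi : q i < Ri) by (unfold Ri; lra).
        pose proof (dd (theta i) Ri (q i) Hqi HRi) as Hder.
        assert (Hl : theta i + ln (Ri - q i) - ln (q i) - q i / (Ri - q i) - 1 = 0).
        { set (f := fun x => (theta i + ln (Ri - x) - ln x) * x) in Hder.
          set (l := theta i + ln (Ri - q i) - ln (q i) - q i / (Ri - q i) - 1) in *.
          assert (pr : derivable_pt f (q i)) by (exists l; exact Hder).
          replace l with (derive_pt f (q i) (exist _ l Hder)) by reflexivity.
          apply (deriv_maximum f (q i / 2) (q i + d)); [lra|lra|].
          intros x Hx1 Hx2.
          pose proof (Hne i Hi x (HB i Hi x ltac:(lra) ltac:(fold d; lra))) as Hle.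
          rewrite payoff_update, payoff_self in Hle by auto. fold Q Ri in Hle. exact Hle. }
        set (u := q i / (Ri - q i)).
        assert (Hu : 0 < u) by (unfold u; apply Rdiv_lt_0_compat; lra).
        assert (Hlu : ln u = ln (q i) - ln (Ri - q i)) by (unfold u; apply ln_div; lra).
        assert (Hue : u * exp u = exp (theta i - 1)).
        { rewrite <- (exp_ln u Hu) at 1. rewrite <- exp_plus. f_equal. fold u in Hl. lra. }
        assert (u = w i) by (apply LW_unique; auto; [apply exp_pos|lra]).
        assert (Ri - q i = 1 - Q) by (unfold Ri; ring).
        rewrite <- H. unfold u. rewrite H0. field. lra.
      -
        exfalso.
        assert (HRi : 0 < Ri) by (unfold Ri; rewrite <- Hqi; lra).
        set (e := exp (theta i)). assert (He : 0 < e) by apply exp_pos.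
        set (x := Rmin d (e * Ri / (1 + e)) / 2).
        assert (Hm1 : Rmin d (e * Ri / (1 + e)) <= d) by apply Rmin_l.
        assert (Hm2 : Rmin d (e * Ri / (1 + e)) <= e * Ri / (1 + e)) by apply Rmin_r.
        assert (Hm0 : 0 < Rmin d (e * Ri / (1 + e))).
        { apply Rmin_glb_lt; auto. apply Rdiv_lt_0_compat; nra. }
        assert (Hx0 : 0 < x) by (unfold x; lra).
        assert (Hxe : x * (1 + e) < e * Ri).
        { assert (x < e * Ri / (1 + e)) by (unfold x; lra).
          apply (Rmult_lt_compat_r (1 + e)) in H; [|lra].
          replace (e * Ri / (1 + e) * (1 + e)) with (e * Ri) in H by (field; lra). lra. }
        assert (Hln : ln x < theta i + ln (Ri - x)).
        { replace (theta i + ln (Ri - x)) with (ln (e * (Ri - x))).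
          - apply ln_increasing; auto. nra.
          - unfold e. rewrite ln_mult; [rewrite ln_exp; reflexivity|apply exp_pos|]. fold e.
            assert (x * (1 + e) < Ri * (1 + e)) by nra.
            apply Rmult_lt_reg_r in H; lra. }
        assert (Hxd : x <= q i + d) by (unfold x; lra).
        pose proof (Hne i Hi x (HB i Hi x ltac:(lra) Hxd)) as Hle.
        rewrite payoff_update, payoff_self in Hle by auto. fold Q Ri in Hle.
        rewrite <- Hqi in Hle. nra. }
    assert (HQW : Q = (1 - Q) * W).
    { unfold Q, W. rewrite <- sumS_scal. apply sumS_ext. auto. }
    intros i Hi. rewrite HC by auto. unfold qhat. fold W.
    assert (1 - Q = / (1 + W)) by (field_simplify_eq; [nra|lra]).
    rewrite H. field. lra. }
  split; [exact Hprice|].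
  assert (Hrev : revenue theta S qhat = sumS S (fun i => w i ^ 2 + w i) / (1 + sumS S w)).
  { unfold revenue. fold W.
    rewrite (sumS_ext S _ (fun i => / (1 + W) * (w i ^ 2 + w i))).
    - rewrite sumS_scal. unfold Rdiv. ring.
    - intros j Hj. rewrite Hprice by auto. unfold qhat. fold W. field. lra. }
  split; [|exact Hrev].
  unfold welfare. rewrite Hrev. f_equal. f_equal. f_equal.
  apply sumS_ext. intros j Hj. rewrite Hprice by auto.
  destruct (Hw j) as [_ [_ [_ H]]]. rewrite <- H at 2. f_equal. ring.
Qed.
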